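(* Consider the information processing system below operated under an arbitrary inspection policy. Fix a job index $i\in\mathbb{N}$ and $x>0$. Let $S^F_i(h,l)$ and $\widehat H^F_i$ denote the values of $S_{i,t}(h,l)$ and $\widehat H_{i,t}$ at the time job $i$ departs from the system, and let $$\mathcal{G}_x=\{\exists h'\in\mathcal{H}\text{ such that } S^F_i(h',l)\ge x\ \ \forall l\in\mathcal{H},\,l\neq h'\}.$$ Then for all $h\in\mathcal{H}$, $$\mathbb{P}(\widehat H^F_i\neq h,\ \mathcal{G}_x\mid H_i=h)\le c_\mathcal{H}\exp(-x).$$
   Context: Model: jobs arrive by a rate-1 Poisson process; job $i$ has a hidden label $H_i$ in a finite set $\mathcal{H}$ with $|\mathcal{H}|=c_\mathcal{H}$, i.i.d. with a prior $\pi$ having positive entries. There are finitely many experts, each with a type $k$ in a finite set $\mathcal{K}$; a type-$k$ expert's inspection lasts an independent exponential time of mean $1/\mu_k$ and its outcome, if it is the $j$-th inspection of job $i$, is $X_{i,j}\in\mathcal{X}$ ($\mathcal{X}$ finite) with law $p(H_i,k,\cdot)$, independent of everything else. An inspection policy may, using all past history, assign idle experts to jobs and let jobs depart with a classification. Let $N_{i,t}$ be the number of inspections job $i$ has received (completed) by time $t$, $K_{i,j}$ the type of the expert performing its $j$-th inspection, and $$S_{i,t}(h,l)=\sum_{j=1}^{N_{i,t}}\ln\frac{p(h,K_{i,j},X_{i,j})}{p(l,K_{i,j},X_{i,j})},\qquad h,l\in\mathcal{H}.$$ $\widehat H_{i,t}$ is the maximum-likelihood estimator $\widehat H_{i,t}\in\arg\max_{h\in\mathcal{H}}\prod_{j=1}^{N_{i,t}}p(h,K_{i,j},X_{i,j})$,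 ties broken arbitrarily. *)

(* Defs.v *)
From mathcomp Require Import all_boot all_order all_algebra.
From mathcomp Require Import all_classical all_reals all_analysis.
Set Implicit Arguments.
Unset Strict Implicit.
Unset Printing Implicit Defensive.
Import Order.TTheory GRing.Theory Num.Theory.
Local Open Scope ring_scope.

(* hT : finite label set H, kT : finite set K of expert types,
   xT : finite outcome set X,  p h k x = p(h,k,x).

   A history of job i is the sequence of its completed inspections
   [:: (K_{i,1}, X_{i,1}); ...; (K_{i,n}, X_{i,n})].

   All randomness of the system other than H_i and job i's inspection
   outcomes (other jobs' labels and outcomes, Poisson arrival times,
   exponential inspection durations, any randomisation of the policy) is
   collected in an element w of a general probability space (Om, P0),
   independent of H_i and of job i's outcomes.  Given w and the outcomes of
   job i revealed so far, an (arbitrary, history dependent) inspection policy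
   determines deterministically what happens next to job i:
     dec w s = Some k : the next completed inspection of job i is by a
                        type-k expert,
     dec w s = None   : job i departs with history s;
   and est w s is the classification (an ML estimate, ties broken
   arbitrarily) attached at departure. *)

Section System.
Variables (R : realType) (hT kT xT : finType).
Variable p : hT -> kT -> xT -> R.

Definition llr (s : seq (kT * xT)) (h l : hT) : R :=
  \sum_(kx <- s) ln (p h kx.1 kx.2 / p l kx.1 kx.2).

Definition lik (s : seq (kT * xT)) (h : hT) : R :=
  \prod_(kx <- s) p h kx.1 kx.2.

Definition is_ML (s : seq (kT * xT)) (h : hT) : Prop :=
  forall h', lik s h' <= lik s h.

Definition G_event (x : R) (s : seq (kT * xT)) : bool :=
  [exists h' : hT, [forall l : hT, (l != h') ==> (x <= llr s h' l)]].

(* Probability, given H_i = h and the external randomness fixed by the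
   policy decisions dec, that the inspections of job i complete in order
   along the (whole) history s appended to pre: each next inspection type is
   the one chosen by the policy, and each outcome has law p(h, k, .). *)
Fixpoint path_weight (dec : seq (kT * xT) -> option kT) (h : hT)
    (pre s : seq (kT * xT)) : R :=
  match s with
  | [::] => 1
  | kx :: s' =>
      ((dec pre == Some kx.1)%:R * p h kx.1 kx.2) *
      path_weight dec h (rcons pre kx) s'
  end.

(* P(job i departs, hat H^F_i <> h, G_x | H_i = h) *)
Definition prob_wrong_G (d : measure_display) (Om : measurableType d)
    (P0 : probability Om R) (dec : Om -> seq (kT * xT) -> option kT)
    (est : Om -> seq (kT * xT) -> hT) (x : R) (h : hT) : \bar R :=
  (\int[P0]_w
    (\sum_(0 <= n <oo)
       (\sum_(s : n.-tuple (kT * xT))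
          (path_weight (dec w) h [::] s * (dec w s == None)%:R
           * ((est w s != h) && G_event x s)%:R))%:E))%E.

End System.

(* Main.v *)
Require Import Defs.
From mathcomp Require Import all_boot all_order all_algebra.
From mathcomp Require Import all_classical all_reals all_analysis.
From mathcomp Require Import measurable_realfun.
Import Order.TTheory GRing.Theory Num.Theory.
Local Open Scope ring_scope.
From mathcomp Require Import ring lra.
Section Comb.
Variables (R : realType) (hT kT xT : finType) (p : hT -> kT -> xT -> R).
Hypothesis p_pos : forall h k y, 0 < p h k y.
Hypothesis p_sum1 : forall h k, \sum_(y : xT) p h k y = 1.

Fixpoint ind (D : seq (kT * xT) -> option kT) pre (s : seq (kT * xT)) : R :=
  match s with
  | [::] => 1
  | kx :: s' => (D pre == Some kx.1)%:R * ind D (rcons pre kx) s'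
  end.

Lemma ind_ge0 D pre s : 0 <= ind D pre s.
Proof. elim: s pre => [|kx s IH] pre /=; first by []. by rewrite mulr_ge0. Qed.

Lemma pw_ind D h pre s : path_weight p D h pre s = ind D pre s * lik p s h.
Proof.
elim: s pre => [|kx s IH] pre /=; first by rewrite /lik big_nil mulr1.
by rewrite IH /lik big_cons; ring.
Qed.

Lemma pw_ge0 D h pre s : 0 <= path_weight p D h pre s.
Proof. rewrite pw_ind mulr_ge0 ?ind_ge0 // /lik prodr_ge0 // => i _; exact: ltW. Qed.

Lemma lik_gt0 s h : 0 < lik p s h.
Proof. by rewrite /lik prodr_gt0. Qed.

Lemma llrE s h l : llr p s h l = ln (lik p s h / lik p s l).
Proof.
elim: s => [|kx s IH]; first by rewrite /llr /lik !big_nil divr1 ln1.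
rewrite /llr /lik !big_cons -/(llr p s h l) -/(lik p s h) -/(lik p s l) IH.
by rewrite -lnM ?posrE ?divr_gt0 ?lik_gt0 // invfM mulrACA.
Qed.

Lemma big_tuple_cons (T : finType) n (F : n.+1.-tuple T -> R) :
  \sum_(s : n.+1.-tuple T) F s = \sum_(t : T) \sum_(s : n.-tuple T) F [tuple of t :: s].
Proof.
rewrite pair_big /=.
rewrite (reindex (fun q : T * n.-tuple T => [tuple of q.1 :: q.2])) //=.
exists (fun u : n.+1.-tuple T => (thead u, [tuple of behead u])).
- by move=> [t s] _ /=; congr pair; apply: val_inj.
- by move=> u _; rewrite [RHS]tuple_eta.
Qed.

Lemma big_tuple0 (T : finType) (F : 0.-tuple T -> R) :
  \sum_(s : 0.-tuple T) F s = F [tuple].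
Proof.
rewrite (eq_bigr (fun _ => F [tuple])); last by move=> s _; rewrite tuple0.
by rewrite sumr_const card_tuple expn0.
Qed.

Definition Stop D h N pre :=
  \sum_(0 <= n < N) \sum_(s : n.-tuple (kT * xT))
     path_weight p D h pre s * (D (pre ++ s) == None)%:R.
Definition Mass D h N pre :=
  \sum_(s : N.-tuple (kT * xT)) path_weight p D h pre s.

Lemma stop_mass D h N pre : Stop D h N pre + Mass D h N pre = 1.
Proof.
elim: N pre => [|N IH] pre.
  by rewrite /Stop /Mass big_geq // add0r big_tuple0.
have -> : Stop D h N.+1 pre = (D pre == None)%:R + \sum_(t : kT * xT)
    ((D pre == Some t.1)%:R * p h t.1 t.2) * Stop D h N (rcons pre t).
  rewrite /Stop big_nat_recl // big_tuple0 /= cats0 mul1r; congr (_ + _).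
  under eq_bigr do rewrite big_tuple_cons.
  rewrite exchange_big /=; apply: eq_bigr => t _.
  rewrite big_distrr /=; apply: eq_bigr => n _.
  rewrite big_distrr /=; apply: eq_bigr => s _.
  by rewrite cat_rcons mulrA.
have -> : Mass D h N.+1 pre = \sum_(t : kT * xT)
    ((D pre == Some t.1)%:R * p h t.1 t.2) * Mass D h N (rcons pre t).
  rewrite /Mass big_tuple_cons; apply: eq_bigr => t _.
  by rewrite big_distrr.
rewrite -addrA -big_split /=.
under eq_bigr do rewrite -mulrDr IH mulr1.
rewrite -(pair_big predT predT (fun k y => (D pre == Some k)%:R * p h k y)) /=.
under eq_bigr do rewrite -big_distrr /= p_sum1 mulr1.
case: (D pre) => [k0|] /=.
  rewrite add0r (bigD1 k0) //= eqxx big1 ?addr0 // => k /negbTE kk.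
  by case: eqP => // -[] E; rewrite E eqxx in kk.
by rewrite big1 ?addr0.
Qed.

Lemma stop_le1 D h N pre : Stop D h N pre <= 1.
Proof.
rewrite -(stop_mass D h N pre) lerDl /Mass sumr_ge0 // => s _; exact: pw_ge0.
Qed.

Lemma term_le D E (E_ML : forall s, is_ML p s (E s)) x (x_pos : 0 < x) h s :
  path_weight p D h [::] s * (D s == None)%:R * ((E s != h) && G_event p x s)%:R
  <= expR (- x) * \sum_(h' : hT) path_weight p D h' [::] s * (D s == None)%:R.
Proof.
have rhs0 : 0 <= expR (- x) * \sum_(h' : hT) path_weight p D h' [::] s * (D s == None)%:R.
  by rewrite mulr_ge0 ?expR_ge0 // sumr_ge0 // => h' _; rewrite mulr_ge0 ?pw_ge0.
case: (boolP ((E s != h) && G_event p x s)) => [/andP [Eh /existsP [h' /forallP H']]|_];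
  last by rewrite mulr0.
have Eh' : E s = h'.
  apply/eqP/negPn/negP => ne.
  have := H' (E s); rewrite ne /= llrE => hx.
  have : ln (lik p s h' / lik p s (E s)) <= 0.
    by apply: ln_le0; rewrite ler_pdivrMr ?lik_gt0 // mul1r; apply: E_ML.
  move=> /(le_trans hx); rewrite leNgt x_pos //.
have := H' h; rewrite -Eh' eq_sym Eh /= llrE => hx.
have hl : lik p s h <= expR (- x) * lik p s (E s).
  have : expR x <= lik p s (E s) / lik p s h.
    by rewrite -[X in _ <= X]lnK ?ler_expR // posrE divr_gt0 ?lik_gt0.
  rewrite ler_pdivlMr ?lik_gt0 // expRN => H.
  have i0 : 0 <= (expR x)^-1 by rewrite invr_ge0 expR_ge0.
  have := ler_wpM2l i0 H.
  by rewrite mulrA mulVf ?mul1r // gt_eqF // expR_gt0.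
rewrite mulr1 (bigD1 (E s)) //= mulrDr.
set T2 := expR (- x) * \sum_(i | i != E s) path_weight p D i [::] s * (D s == None)%:R.
have T20 : 0 <= T2.
  by rewrite mulr_ge0 ?expR_ge0 // sumr_ge0 // => h'' _; rewrite mulr_ge0 ?pw_ge0.
apply: (@le_trans _ _ (expR (- x) * (path_weight p D (E s) [::] s * (D s == None)%:R))); last by rewrite lerDl.
rewrite !pw_ind mulrA; apply: ler_wpM2r; first by [].
rewrite mulrCA; apply: ler_wpM2l; first exact: ind_ge0.
exact: hl.
Qed.
End Comb.
Lemma mind (R : realType) (d : measure_display) (Om : measurableType d) (b : Om -> bool) :
  measurable [set w | b w] -> measurable_fun setT (fun w => (b w)%:R : R).
Proof.
move=> mb; have -> : (fun w => (b w)%:R) = \1_[set w | b w] :> (Om -> R).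
  apply/funext => w; rewrite /indic; case: (boolP (b w)) => bw.
    by rewrite mem_set.
  rewrite memNset //= => bw2; by rewrite bw2 in bw.
exact: measurable_indic.
Qed.

Theorem lemma1 (R : realType) (hT kT xT : finType)
  (p : hT -> kT -> xT -> R)
  (p_pos : forall h k y, 0 < p h k y)
  (p_sum1 : forall h k, \sum_(y : xT) p h k y = 1)
  (d : measure_display) (Om : measurableType d) (P0 : probability Om R)
  (dec : Om -> seq (kT * xT) -> option kT)
  (est : Om -> seq (kT * xT) -> hT)
  (dec_meas : forall s o, measurable [set w | dec w s = o])
  (est_meas : forall s h, measurable [set w | est w s = h])
  (est_ML : forall w s, is_ML p s (est w s))
  (x : R) (x_pos : 0 < x) (h : hT) :
  (prob_wrong_G p P0 dec est x h <= (#|hT|%:R * expR (- x))%:E)%E.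
Proof.
set F := fun w n => \sum_(s : n.-tuple (kT * xT))
          (path_weight p (dec w) h [::] s * (dec w s == None)%:R
           * ((est w s != h) && G_event p x s)%:R).
have F0 : forall w n, 0 <= F w n.
  move=> w n; rewrite /F sumr_ge0 // => s _.
  by rewrite !mulr_ge0 ?pw_ge0.
have mdec : forall pre o, measurable_fun setT (fun w => (dec w pre == o)%:R : R).
  move=> pre o; apply: mind.
  have -> : ([set w | dec w pre == o] = [set w | dec w pre = o])%classic.
    by apply/funext => w; apply/propext; split => /eqP.
  exact: dec_meas.
have mpw : forall s pre, measurable_fun setT (fun w => path_weight p (dec w) h pre s).
  elim=> [|kx s IH] pre /=; first exact: measurable_cst.
  apply: measurable_funM => //; apply: measurable_funM => //; exact: measurable_cst.
have mest : forall s, measurable_fun setT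
    (fun w => ((est w s != h) && G_event p x s)%:R : R).
  move=> s; apply: mind.
  have -> : ([set w | (est w s != h) && G_event p x s] =
      ~` [set w | est w s = h] `&` [set _ | G_event p x s])%classic.
    apply/funext => w; apply/propext; split.
      by move=> /andP [/eqP ne g]; split.
    by move=> [/eqP ne g]; apply/andP.
  apply: measurableI; first exact: measurableC.
  case: (G_event p x s).
    by rewrite (_ : ([set _ | true] = setT)%classic) //; apply/funext => w; apply/propext.
  by rewrite (_ : ([set _ | false] = set0)%classic) //; apply/funext => w; apply/propext.
have mF : forall n, measurable_fun setT (fun w => (F w n)%:E).
  move=> n; apply/measurable_EFinP; rewrite /F.
  apply: measurable_sum => s; apply: measurable_funM; last exact: mest.
  by apply: measurable_funM.
have bound : forall w, (\sum_(0 <= n <oo) (F w n)%:E <= (#|hT|%:R * expR (- x))%:E)%E.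
  move=> w.
  apply: lime_le; first by apply: is_cvg_nneseries => n _ _; rewrite lee_fin.
  apply: nearW => N; rewrite sumEFin lee_fin.
  apply: (@le_trans _ _ (\sum_(0 <= n < N) \sum_(s : n.-tuple (kT * xT))
     expR (- x) * \sum_(h' : hT) path_weight p (dec w) h' [::] s * (dec w s == None)%:R)).
    apply: ler_sum => n _; apply: ler_sum => s _; exact: term_le.
  under eq_bigr do rewrite -big_distrr /=.
  rewrite -big_distrr /= mulrC; apply: ler_wpM2r; first exact: expR_ge0.
  under eq_bigr do rewrite exchange_big /=.
  rewrite exchange_big /=.
  apply: (@le_trans _ _ (\sum_(h' : hT) 1)); last by rewrite sumr_const.
  apply: ler_sum => hh _; exact: (@stop_le1 _ _ _ _ _ p_pos p_sum1 (dec w) hh N [::]).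
rewrite /prob_wrong_G.
apply: (@le_trans _ _ (\int[P0]_w (cst (#|hT|%:R * expR (- x))%:E) w))%E.
  apply: ge0_le_integral => //.
  - move=> w _; apply: (nneseries_ge0 (P := xpredT)) => n _ _; rewrite lee_fin; exact: F0.
  - have := @ge0_emeasurable_sum _ _ R setT (fun n w => (F w n)%:E) predT.
    by apply => // k w _ _; rewrite lee_fin; exact: F0.
  - move=> w _; exact: bound.
rewrite integral_cst //. rewrite le_eqVlt; apply/orP; left; apply/eqP. rewrite -[RHS]mule1; congr (_ * _)%E; exact: probability_setT.
Qed.
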